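(* Let $X=(X_1,\dots,X_d)$ be a random vector with values in $\{0,1\}^d$ such that $\mathbb{P}(X=x)>0$ for every $x\in\{0,1\}^d$. For $A\subseteq D:=\{1,\dots,d\}$ let $e_A(X_A):=\dfrac{(-1)^{\sum_{j\in A}X_j}}{\mathbf{P}_A(X_A)}$, with $e_\emptyset(X_\emptyset)=1$. Then for all $A,B\subseteq D$ with $B\subsetneq A$, $\mathbb{E}[e_A(X_A)e_B(X_B)]=0$.
   Context: $X_A:=(X_i)_{i\in A}$ and $\mathbf{P}_A(x_A):=\mathbb{P}(X_A=x_A)$ is its probability mass function. *)

(* Defs.v *)
From HB Require Import structures.
From mathcomp Require Import all_boot all_order all_algebra.
From mathcomp Require Import reals.
Set Implicit Arguments. Unset Strict Implicit. Unset Printing Implicit Defensive.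
Import Order.TTheory GRing.Theory Num.Theory.
Local Open Scope ring_scope.

(* outcomes x in {0,1}^d, coordinates indexed by 'I_d (= D), true = 1 *)
Definition outcome (d : nat) := {ffun 'I_d -> bool}.

Definition is_pmf (R : realType) (d : nat) (P : outcome d -> R) :=
  (forall x, 0 <= P x) /\ \sum_(x : outcome d) P x = 1.

Definition marg (R : realType) (d : nat) (P : outcome d -> R)
  (A : {set 'I_d}) (x : outcome d) : R :=
  \sum_(y : outcome d | [forall j in A, y j == x j]) P y.

Definition eA (R : realType) (d : nat) (P : outcome d -> R)
  (A : {set 'I_d}) (x : outcome d) : R :=
  (-1) ^+ #|[set j in A | x j]| / marg P A x.

Definition expect (R : realType) (d : nat) (P : outcome d -> R)
  (f : outcome d -> R) : R :=
  \sum_(x : outcome d) P x * f x.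

(* Main.v *)
Require Import Defs.
From HB Require Import structures.
From mathcomp Require Import all_boot all_order all_algebra.
From mathcomp Require Import reals.
From mathcomp Require Import ring lra.
Import Order.TTheory GRing.Theory Num.Theory.
Local Open Scope ring_scope.

Set Implicit Arguments. Unset Strict Implicit.
Section Helpers.
Variables (R : realType) (d : nat) (P : outcome d -> R).
Hypothesis hpos : forall x, 0 < P x.

Definition agree (A : {set 'I_d}) (x y : outcome d) := [forall j in A, x j == y j].

Lemma marg_eq A x y : agree A x y -> marg P A x = marg P A y.
Proof.
move=> /forall_inP H; apply: eq_bigl => z.
apply/forall_inP/forall_inP => Hz i iA.
  by rewrite (eqP (Hz i iA)) (H i iA).
by rewrite (eqP (Hz i iA)) (eqP (H i iA)).
Qed.

Lemma marg_gt0 A x : 0 < marg P A x.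
Proof.
rewrite /marg (bigD1 x); last by apply/forall_inP.
rewrite /= ltr_wpDr //; apply: sumr_ge0 => i _; exact/ltW.
Qed.

Lemma sgn_eq A x y : agree A x y ->
  [set j in A | x j] = [set j in A | y j].
Proof.
move=> /forall_inP H; apply/setP => i; rewrite !inE.
by case iA: (i \in A) => //=; rewrite (eqP (H i iA)).
Qed.

Definition cproj (A : {set 'I_d}) (x : outcome d) : outcome d :=
  [ffun i => (i \in A) && x i].

Definition flip (j : 'I_d) (x : outcome d) : outcome d :=
  [ffun i => if i == j then ~~ x i else x i].

Lemma flipK j : involutive (flip j).
Proof.
move=> x; apply/ffunP => i; rewrite !ffunE.
by case: (i == j) => //; rewrite negbK.
Qed.

Lemma sgn_prod (A : {set 'I_d}) (x : outcome d) : (-1) ^+ #|[set j in A | x j]| =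
  \prod_(i in A) (if x i then -1 else 1) :> R.
Proof.
have -> : \prod_(i in A) (if x i then -1 else 1) = \prod_(i in A | x i) (-1:R).
  by rewrite big_mkcondr.
rewrite prodr_const; congr (_ ^+ _).
by apply: eq_card => i; rewrite inE.
Qed.

End Helpers.

Theorem proposition3 (R : realType) (d : nat) (P : outcome d -> R)
  (hP : is_pmf P) (hpos : forall x, 0 < P x)
  (A B : {set 'I_d}) (hBA : B \proper A) :
  expect P (fun x => eA P A x * eA P B x) = 0.
Proof.
have [sBA [j jA jB]] := properP hBA.
pose sA (x : outcome d) : R := (-1) ^+ #|[set i in A | x i]|.
pose g x := sA x * eA P B x.
have agAB x y : agree A x y -> agree B x y.
  move=> /forall_inP H; apply/forall_inP => i iB; apply: H; exact: (subsetP sBA).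
have geq x y : agree A x y -> g x = g y.
  move=> H; rewrite /g /sA /eA (sgn_eq H) (sgn_eq (agAB _ _ H)).
  by rewrite (marg_eq P (agAB _ _ H)).
have mne0 x : marg P A x != 0 by rewrite gt_eqF // marg_gt0.
have -> : expect P (fun x => eA P A x * eA P B x) =
    \sum_x P x * g x / marg P A x.
  apply: eq_bigr => x _; rewrite /g /eA /sA.
  by field; rewrite !gt_eqF ?marg_gt0.
pose G z := if cproj A z == z then g z else 0.
have step2 : \sum_x P x * g x / marg P A x = \sum_z G z.
  rewrite (partition_big (cproj A) predT) //=.
  apply: eq_bigr => z _; rewrite /G.
  case cz: (cproj A z == z).
    rewrite (eq_bigl (fun x => agree A x z)); last first.
      move=> x; apply/eqP/forall_inP.
        move=> <- i iA; by rewrite ffunE iA.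
      move=> H; apply/ffunP => i; rewrite -(eqP cz) !ffunE.
      by case iA: (i \in A) => //=; apply/eqP; apply: H.
    rewrite (eq_bigr (fun x => P x * (g z / marg P A z))); last first.
      move=> x H; rewrite (geq _ _ H) (marg_eq P H); by rewrite mulrA.
    by rewrite -big_distrl /= -/(marg P A z) mulrC divfK.
  rewrite big_pred0 // => x; apply/negP => /eqP H.
  move/negP: cz; apply; apply/eqP; rewrite -H; apply/ffunP => i.
  by rewrite !ffunE; case: (i \in A).
have step3 z : G (flip j z) = - G z.
  rewrite /G.
  have -> : (cproj A (flip j z) == flip j z) = (cproj A z == z).
    apply/eqP/eqP => /ffunP H; apply/ffunP => i; have := H i;
      rewrite !ffunE; case: (i =P j) => [->|_]; rewrite ?jA //.
  case: (cproj A z == z); last by rewrite oppr0.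
  rewrite /g /sA !sgn_prod (bigD1 j jA) /= [in RHS](bigD1 j jA) /=.
  have agB : agree B (flip j z) z.
    apply/forall_inP => i iB; rewrite ffunE; case: (i =P j) => [E|//].
    by rewrite -E iB in jB.
  have -> : eA P B (flip j z) = eA P B z.
    by rewrite /eA (sgn_eq agB) (marg_eq P agB).
  rewrite (eq_bigr (fun i => if z i then -1 else 1)); last first.
    by move=> i /andP [_ /negPf ij]; rewrite ffunE ij.
  rewrite ffunE eqxx; case: (z j) => /=; ring.
rewrite step2.
set S := \sum_z G z.
have : S = - S.
  rewrite {1}/S (reindex_inj (can_inj (flipK j))) /=.
  by rewrite (eq_bigr _ (fun z _ => step3 z)) sumrN.
move=> H; lra.
Qed.
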